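(* Let $\mathbb{X},\mathbb{Y}$ be Euclidean spaces, $\mathbb{Z}=\mathbb{X}\times\mathbb{Y}$ equipped with a norm $\|\cdot\|$ with dual norm $\|\cdot\|_*$, and $\mathcal{X}\subseteq\mathbb{X}$, $\mathcal{Y}\subseteq\mathbb{Y}$ closed convex sets, $\mathcal{Z}=\mathcal{X}\times\mathcal{Y}$. Let $\phi:\mathcal{Z}\to\mathbb{R}$ be convex-concave (convex in $x$, concave in $y$) and differentiable, with $F(z)=(\partial_x\phi(z),-\partial_y\phi(z))$ satisfying $\sup_{z\in\mathcal{Z}}\|F(z)\|_*<\infty$ and $\|F(z)-F(z')\|_*\le L\|z-z'\|$ for all $z,z'\in\mathcal{Z}$. Let $\psi_{\mathbb{Z}}$ be smooth and $1$-strongly convex w.r.t. $\|\cdot\|$, with Bregman divergence $D_{\mathbb{Z}}(w,z)=\psi_{\mathbb{Z}}(w)-\psi_{\mathbb{Z}}(z)-\langle\nabla\psi_{\mathbb{Z}}(z),w-z\rangle$, and let $\Omega=\sup_{z,z'\in\mathcal{Z}}D_{\mathbb{Z}}(z,z')$. For $\xi,z\in\mathbb{Z}$ let $\mathrm{Prox}^{\mathcal{Z}}_{\langle\xi,\cdot\rangle}(z)=\arg\min_{w\in\mathcal{Z}}\{\langle\xi,w\rangle+D_{\mathbb{Z}}(w,z)\}$. Let $z^0\in\mathcal{Z}$, stepsizes $\tau_t>0$, and let Mirror Prox generate, for $t=0,1,2,\dots$, $\tilde z^t=\mathrm{Prox}^{\mathcal{Z}}_{\langle\tau_tF(z^t),\cdot\rangle}(z^t)$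 and $z^{t+1}=\mathrm{Prox}^{\mathcal{Z}}_{\langle\tau_tF(\tilde z^t),\cdot\rangle}(z^t)$. Let $\delta_t=\tau_t\langle F(\tilde z^t),\tilde z^t-z^{t+1}\rangle-D_{\mathbb{Z}}(z^{t+1},z^t)$. Let $w_t\ge0$ be nondecreasing, $S_T=\sum_{t=1}^Tw_t\tau_t$ (assumed positive), and $\bar z^T=(\bar x^T,\bar y^T)=\frac1{S_T}\sum_{t=1}^Tw_t\tau_t\tilde z^t$. Then for every $T\ge1$ and every $(x,y)\in\mathcal{X}\times\mathcal{Y}$, $$\phi(\bar x^T,y)-\phi(x,\bar y^T)\le\frac{w_T\Omega+\sum_{t=1}^Tw_t\delta_t}{S_T}.$$ In particular, if $\tau_t=\frac1L$ for all $t$ and $w_t=t^q$ with $q\ge0$, then $\delta_t\le0$ for all $t$ and $$\phi(\bar x^T,y)-\phi(x,\bar y^T)\le\frac{(q+1)L\Omega}{T}.$$ *)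

(* Defs.v *)
From HB Require Import structures.
From mathcomp Require Import all_boot all_order all_algebra.
From mathcomp Require Import all_classical all_reals all_analysis.
Set Implicit Arguments. Unset Strict Implicit. Unset Printing Implicit Defensive.
Import Order.TTheory GRing.Theory Num.Theory.
Import numFieldNormedType.Exports.
Local Open Scope classical_set_scope.
Local Open Scope ring_scope.

Definition dotv (R : realType) (k : nat) (u v : 'rV[R]_k) : R :=
  \sum_(i < k) u ord0 i * v ord0 i.

Definition grad (R : realType) (k : nat) (f : 'rV[R]_k -> R) (z : 'rV[R]_k) : 'rV[R]_k :=
  \row_(i < k) ('D_(delta_mx ord0 i) f z).

Definition is_norm (R : realType) (k : nat) (N : 'rV[R]_k -> R) : Prop :=
  [/\ forall x, N x = 0 -> x = 0,
      forall (a : R) x, N (a *: x) = `|a| * N x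
    & forall x y, N (x + y) <= N x + N y].

Definition dual_norm (R : realType) (k : nat) (N : 'rV[R]_k -> R) (xi : 'rV[R]_k) : R :=
  sup [set dotv xi z | z in [set z | N z <= 1]].

Definition strongly_convex1 (R : realType) (k : nat) (N : 'rV[R]_k -> R)
  (psi : 'rV[R]_k -> R) : Prop :=
  forall x y (t : R), 0 <= t <= 1 ->
    psi (t *: x + (1 - t) *: y) <=
      t * psi x + (1 - t) * psi y - t * (1 - t) / 2 * N (x - y) ^+ 2.

Definition bregman (R : realType) (k : nat) (psi : 'rV[R]_k -> R) (w z : 'rV[R]_k) : R :=
  psi w - psi z - dotv (grad psi z) (w - z).

Definition Omega (R : realType) (k : nat) (psi : 'rV[R]_k -> R) (Z : set 'rV[R]_k) : \bar R :=
  ereal_sup [set (bregman psi z z')%:E | z in Z & z' in Z].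

Definition is_prox (R : realType) (k : nat) (psi : 'rV[R]_k -> R) (Z : set 'rV[R]_k)
  (xi z p : 'rV[R]_k) : Prop :=
  Z p /\ forall w, Z w -> dotv xi p + bregman psi p z <= dotv xi w + bregman psi w z.

Definition Fop (R : realType) (n m : nat) (phi : 'rV[R]_(n + m) -> R)
  (z : 'rV[R]_(n + m)) : 'rV[R]_(n + m) :=
  let g := grad phi z in row_mx (lsubmx g) (- rsubmx g).

Definition prodset (R : realType) (n m : nat) (X : set 'rV[R]_n) (Y : set 'rV[R]_m)
  : set 'rV[R]_(n + m) := [set z | X (lsubmx z) /\ Y (rsubmx z)].

Definition mp_delta (R : realType) (k : nat) (psi : 'rV[R]_k -> R) (F : 'rV[R]_k -> 'rV[R]_k)
  (tau : nat -> R) (z zt : nat -> 'rV[R]_k) (t : nat) : R :=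
  tau t * dotv (F (zt t)) (zt t - z t.+1) - bregman psi (z t.+1) (z t).

Definition mp_S (R : realType) (w tau : nat -> R) (T : nat) : R :=
  \sum_(1 <= t < T.+1) w t * tau t.

Definition mp_zbar (R : realType) (k : nat) (w tau : nat -> R) (zt : nat -> 'rV[R]_k)
  (T : nat) : 'rV[R]_k :=
  (mp_S w tau T)^-1 *: \sum_(1 <= t < T.+1) (w t * tau t) *: zt t.

(* Main.v *)
Require Import Defs.
From HB Require Import structures.
From mathcomp Require Import all_boot all_order all_algebra.
From mathcomp Require Import all_classical all_reals all_analysis.
From mathcomp Require Import ring lra.
Import Order.TTheory GRing.Theory Num.Theory.
Import numFieldNormedType.Exports.
Local Open Scope classical_set_scope.
Local Open Scope ring_scope.
Set Implicit Arguments. Unset Strict Implicit. Unset Printing Implicit Defensive.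
Section Dot.
Variables (R : realType) (k : nat).
Implicit Types u v w : 'rV[R]_k.

Lemma dotvDr u v w : dotv u (v + w) = dotv u v + dotv u w.
Proof. by rewrite /dotv -big_split; apply: eq_bigr => i _; rewrite mxE mulrDr. Qed.
Lemma dotvDl u v w : dotv (v + w) u = dotv v u + dotv w u.
Proof. by rewrite /dotv -big_split; apply: eq_bigr => i _; rewrite mxE mulrDl. Qed.
Lemma dotvZr a u v : dotv u (a *: v) = a * dotv u v.
Proof. by rewrite /dotv mulr_sumr; apply: eq_bigr => i _; rewrite mxE mulrCA. Qed.
Lemma dotvZl a u v : dotv (a *: u) v = a * dotv u v.
Proof. by rewrite /dotv mulr_sumr; apply: eq_bigr => i _; rewrite mxE mulrA. Qed.
Lemma dotvNr u v : dotv u (- v) = - dotv u v.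
Proof. by rewrite -scaleN1r dotvZr mulN1r. Qed.
Lemma dotvNl u v : dotv (- u) v = - dotv u v.
Proof. by rewrite -scaleN1r dotvZl mulN1r. Qed.
Lemma dotvBr u v w : dotv u (v - w) = dotv u v - dotv u w.
Proof. by rewrite dotvDr dotvNr. Qed.
Lemma dotvBl u v w : dotv (v - w) u = dotv v u - dotv w u.
Proof. by rewrite dotvDl dotvNl. Qed.
Lemma dotv0r u : dotv u 0 = 0.
Proof. by rewrite -(scale0r 0) dotvZr mul0r. Qed.
End Dot.

Lemma dotv_row_mx (R : realType) n m (a c : 'rV[R]_n) (b d : 'rV[R]_m) :
  dotv (row_mx a b) (row_mx c d) = dotv a c + dotv b d.
Proof.
rewrite /dotv big_split_ord /=; congr (_ + _); apply: eq_bigr => i _;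
  by rewrite ?row_mxEl ?row_mxEr.
Qed.

Lemma dotv_grad (R : realType) k (f : 'rV[R]_k -> R) a v :
  differentiable f a -> dotv (grad f a) v = 'D_v f a.
Proof.
move=> df; rewrite deriveE // {2}(row_sum_delta v) linear_sum /dotv.
apply: eq_bigr => i _; rewrite linearZ /= mxE -deriveE //.
rewrite mulrC.
have -> : (0 : 'I_1) = ord0 by apply: val_inj.
done.
Qed.

Lemma right_dnbhs (R : realType) (x : R) : (x^'+ : set_system R) `=>` x^'.
Proof.
move=> A; rewrite /dnbhs /at_right /within /=; apply: filterS => y Hy xy.
by apply: Hy; rewrite gt_eqF.
Qed.

Section DerIneq.
Variables (R : realType) (V : normedModType R).

Lemma derive_right (f : V -> R) a d : derivable f a d ->
  (fun h : R => h^-1 *: (f (h *: d + a) - f a)) @ 0^'+ --> 'D_d f a.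
Proof.
move=> df.
have H : (fun h : R => h^-1 *: (f (h *: d + a) - f a)) @ 0^' --> 'D_d f a.
  exact: df.
apply: cvg_trans H; apply: cvg_app; exact: right_dnbhs.
Qed.

Lemma D_le (f : V -> R) a d K C : derivable f a d ->
  (forall s : R, 0 < s <= 1 -> s^-1 * (f (s *: d + a) - f a) <= K + s * C) ->
  'D_d f a <= K.
Proof.
move=> df H.
have HK : (fun s : R => K + s * C) @ 0^'+ --> K.
  rewrite -[X in _ --> X]addr0 -[X in _ + X](mul0r C).
  apply: cvg_at_right_filter; apply: cvgD; first exact: cvg_cst.
  by apply: cvgMl; exact: cvg_id.
apply: (ler_cvg_to (derive_right df) HK).
near=> s; apply: H; apply/andP; split.
  by near: s; exact: nbhs_right_gt.
by near: s; apply: nbhs_right_le; exact: ltr01.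
Unshelve. all: by end_near. Qed.

Lemma D_ge (f : V -> R) a d K C : derivable f a d ->
  (forall s : R, 0 < s <= 1 -> K - s * C <= s^-1 * (f (s *: d + a) - f a)) ->
  K <= 'D_d f a.
Proof.
move=> df H.
have HK : (fun s : R => K - s * C) @ 0^'+ --> K.
  rewrite -[X in _ --> X]subr0 -[X in _ - X](mul0r C).
  apply: cvg_at_right_filter; apply: cvgB; first exact: cvg_cst.
  by apply: cvgMl; exact: cvg_id.
apply: (ler_cvg_to HK (derive_right df)).
near=> s; apply: H; apply/andP; split.
  by near: s; exact: nbhs_right_gt.
by near: s; apply: nbhs_right_le; exact: ltr01.
Unshelve. all: by end_near. Qed.
End DerIneq.
Section NormLemmas.
Variables (R : realType) (k : nat) (N : 'rV[R]_k -> R).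
Hypothesis HN : is_norm N.

Lemma Nhom a x : N (a *: x) = `|a| * N x.
Proof. by case: HN => _ H _; exact: H. Qed.
Lemma Ntri x y : N (x + y) <= N x + N y.
Proof. by case: HN => _ _ H; exact: H. Qed.
Lemma Neq0 x : N x = 0 -> x = 0.
Proof. by case: HN => H _ _; exact: H. Qed.
Lemma N0 : N 0 = 0.
Proof. by rewrite -(scale0r 0) Nhom normr0 mul0r. Qed.
Lemma NN x : N (- x) = N x.
Proof. by rewrite -scaleN1r Nhom normrN normr1 mul1r. Qed.
Lemma Nge0 x : 0 <= N x.
Proof.
have := Ntri x (- x); rewrite subrr N0 NN => H; lra.
Qed.
Lemma NB x y : N (x - y) = N (y - x).
Proof. by rewrite -NN opprB. Qed.

Lemma Nsum (I : Type) (r : seq I) (F : I -> 'rV[R]_k) :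
  N (\sum_(i <- r) F i) <= \sum_(i <- r) N (F i).
Proof.
elim: r => [|a r IH]; first by rewrite !big_nil N0.
rewrite !big_cons; apply: le_trans (Ntri _ _) _; exact: lerD.
Qed.

Lemma coord_le (x : 'rV[R]_k) i : `|x 0 i| <= `|x|.
Proof.
rewrite [leRHS]/Num.norm /= mx_normrE; apply/bigmax_geP; right => /=.
by exists (0, i).
Qed.

Definition Kup := \sum_(i < k) N (delta_mx 0 i).

Lemma Nup x : N x <= Kup * `|x|.
Proof.
rewrite {1}(row_sum_delta x).
apply: (le_trans (Nsum _ (fun j : 'I_k => x 0 j *: delta_mx 0 j))).
rewrite /Kup mulr_suml; apply: ler_sum => i _; rewrite Nhom mulrC.
by apply: ler_wpM2l; [exact: Nge0 | exact: coord_le].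
Qed.

Lemma Kup_ge0 : 0 <= Kup.
Proof. by apply: sumr_ge0 => i _; exact: Nge0. Qed.

Lemma Ncont : continuous N.
Proof.
move=> x; apply/(@cvgrPdist_le _ _ _ _ (nbhs_filter x)) => e e0.
have e1 : 0 < e / (Kup + 1) by rewrite divr_gt0 // ltr_wpDl // Kup_ge0.
near=> y.
have Hy : `|x - y| <= e / (Kup + 1).
  by near: y; apply: cvgr_dist_le e1; exact: cvg_id.
have H1 : `|N x - N y| <= N (x - y).
  have h1 := Ntri (y - x) x; have h2 := Ntri (x - y) y.
  rewrite !subrK NB in h1; rewrite !subrK in h2.
  rewrite ler_norml; apply/andP; split; lra.
apply: le_trans H1 _; apply: le_trans (Nup _) _.
have Kp : 0 < Kup + 1 by rewrite ltr_wpDl // Kup_ge0.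
have Ke : (Kup + 1) * (e / (Kup + 1)) = e by rewrite mulrC mulfVK // gt_eqF.
have K0 := Kup_ge0; have d0 : 0 <= `|x - y| by [].
move: Hy Ke K0 d0; set d := `|x - y|; set q := e / (Kup + 1); move=> *; nra.
Unshelve. all: by end_near. Qed.

Lemma Nlow : exists2 c, 0 < c & forall x, c * `|x| <= N x.
Proof.
pose S := [set x : 'rV[R]_k | `|x| = 1].
have Sc : compact S.
  apply: bounded_closed_compact.
    exists 1; split => // M M1 x /= ->; exact: ltW.
  have -> : S = (fun x : 'rV[R]_k => `|x|) @^-1` [set 1] by [].
  apply: preimage_closed; last exact: closed_eq.
  move=> x _; exact: norm_continuous.
have gc : {within S, continuous (fun x => (N x)^-1)}.
  apply: continuous_in_subspaceT => x; rewrite inE /S /= => x1.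
  apply: (@cvgV _ _ _ (nbhs_filter x)); last exact: Ncont.
  apply/negP => /eqP /Neq0 x0; move: x1; rewrite x0 normr0 => /eqP.
  by rewrite eq_sym oner_eq0.
have := compact_bounded (continuous_compact gc Sc).
move=> /pinfty_ex_gt0 [M M0 HM].
exists M^-1; first by rewrite invr_gt0.
move=> x; have [->|x0] := eqVneq x 0; first by rewrite normr0 mulr0 N0.
have nx : 0 < `|x| by rewrite normr_gt0.
pose y := `|x|^-1 *: x.
have Sy : S y by rewrite /S /= normrZ normfV normr_id mulVf // gt_eqF.
have Ny : N y = `|x|^-1 * N x by rewrite /y Nhom normfV normr_id.
have Nyp : 0 < N y.
  rewrite lt0r Nge0 andbT; apply/eqP => /Neq0 y0; move: Sy; rewrite /S /= y0 normr0.
  by move/eqP; rewrite eq_sym oner_eq0.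
have := HM ((N y)^-1) (ex_intro2 _ _ y Sy erefl).
rewrite /= ger0_norm ?invr_ge0 ?(ltW Nyp) // => H.
have : 1 <= M * N y by rewrite -ler_pdivrMr // mul1r.
rewrite Ny => H2.
have e1 : `|x| * `|x|^-1 = 1 by rewrite mulfV // gt_eqF.
have e2 : M^-1 * M = 1 by rewrite mulVf // gt_eqF.
have p1 : 0 <= M^-1 * `|x| by rewrite mulr_ge0 // ?invr_ge0 ltW.
move: H2 e1 e2 p1; set a := `|x|; set b := `|x|^-1; set c := M^-1; set d := N x.
move=> H2 e1 e2 p1.
have : c * a * 1 <= c * a * (M * (b * d)) by rewrite ler_wpM2l.
have -> : c * a * (M * (b * d)) = (c * M) * (a * b) * d by ring.
by rewrite e1 e2 !mulr1 mul1r.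
Qed.

Lemma dual_bound a v : dotv a v <= dual_norm N a * N v.
Proof.
have [c c0 Hc] := Nlow.
pose E := [set dotv a z | z in [set z | N z <= 1]].
have hs : has_sup E.
  split; first by exists (dotv a 0); exists 0 => //=; rewrite N0.
  exists ((\sum_i `|a 0 i|) / c) => _ [z /= Nz <-].
  have zc : `|z| <= c^-1.
    by rewrite -(ler_pM2l c0) mulfV ?gt_eqF //; apply: le_trans (Hc z) Nz.
  rewrite /dotv; apply: le_trans (ler_norm _) _.
  apply: le_trans (ler_norm_sum _ _ _) _; rewrite mulr_suml.
  apply: ler_sum => i _; rewrite normrM ler_wpM2l //.
  by apply: le_trans (coord_le _ _) zc.
have [v0|nv] := eqVneq (N v) 0.
  by rewrite (Neq0 v0) dotv0r N0 mulr0.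
have Nvp : 0 < N v by rewrite lt0r nv Nge0.
have := sup_upper_bound hs (ex_intro2 _ _ ((N v)^-1 *: v) _ erefl).
rewrite dotvZr -ler_pdivlMl ?invr_gt0 // invrK mulrC; apply.
by rewrite /= Nhom ger0_norm ?invr_ge0 ?(ltW Nvp) // mulVf.
Qed.

End NormLemmas.
Section Breg.
Variables (R : realType) (k : nat) (psi : 'rV[R]_k -> R).
Hypothesis psid : forall z, differentiable psi z.

Lemma breg_self z : bregman psi z z = 0.
Proof. by rewrite /bregman !subrr dotv0r subrr. Qed.

Lemma three_point w z p : bregman psi w z =
  bregman psi w p + bregman psi p z + dotv (grad psi p - grad psi z) (w - p).
Proof.
rewrite /bregman dotvBl.
have -> : w - z = (w - p) + (p - z) by rewrite addrA subrK.
rewrite dotvDr; ring.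
Qed.

Lemma prox_VI (Z : set 'rV[R]_k) xi z p w :
  (forall a b (t : R), Z a -> Z b -> 0 <= t <= 1 -> Z (t *: a + (1 - t) *: b)) ->
  is_prox psi Z xi z p -> Z w ->
  0 <= dotv xi (w - p) + dotv (grad psi p - grad psi z) (w - p).
Proof.
move=> Zc [Zp Hp] Zw.
have H : dotv (grad psi z) (w - p) - dotv xi (w - p) <= dotv (grad psi p) (w - p).
  have dd : derivable psi p (w - p) by exact: diff_derivable.
  rewrite (dotv_grad (w - p) (psid p)); apply: (@D_ge R _ psi p (w - p) _ 0 dd).
  move=> s /andP[s0 s1]; rewrite mulr0 subr0.
  have e : s *: (w - p) + p = s *: w + (1 - s) *: p.
    by rewrite scalerBr scalerBl scale1r [RHS]addrA addrAC.
  have := Hp (s *: w + (1 - s) *: p) (Zc _ _ _ Zw Zp (introT andP (conj (ltW s0) s1))).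
  rewrite -e /bregman.
  have -> : s *: (w - p) + p - z = (p - z) + s *: (w - p).
    by rewrite [RHS]addrC -addrA.
  rewrite (dotvDr (grad psi z) (p - z)) dotvZr => Hq.
  rewrite (dotvDr xi) dotvZr in Hq.
  rewrite -(ler_pM2l s0) mulrA mulfV ?gt_eqF // mul1r mulrBr; lra.
rewrite dotvBl; lra.
Qed.

Lemma prox_ineq (Z : set 'rV[R]_k) xi z p w :
  (forall a b (t : R), Z a -> Z b -> 0 <= t <= 1 -> Z (t *: a + (1 - t) *: b)) ->
  is_prox psi Z xi z p -> Z w ->
  dotv xi (p - w) <= bregman psi w z - bregman psi w p - bregman psi p z.
Proof.
move=> Zc Hp Zw; have := prox_VI Zc Hp Zw.
rewrite (three_point w z p) -opprB dotvNr; lra.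
Qed.

Lemma breg_ge (N : 'rV[R]_k -> R) u v : strongly_convex1 N psi ->
  N (u - v) ^+ 2 / 2 <= bregman psi u v.
Proof.
move=> sc.
have H : dotv (grad psi v) (u - v) <= psi u - psi v - N (u - v) ^+ 2 / 2.
  rewrite dotv_grad //.
  have dd : derivable psi v (u - v) by exact: diff_derivable.
  apply: (@D_le R _ psi v (u - v) _ (N (u - v) ^+ 2 / 2) dd).
  move=> s /andP[s0 s1].
  have e : s *: (u - v) + v = s *: u + (1 - s) *: v.
    by rewrite scalerBr scalerBl scale1r [RHS]addrA addrAC.
  have := sc u v s (introT andP (conj (ltW s0) s1)); rewrite -e => Hq.
  rewrite ler_pdivrMl //.
  set n2 := N (u - v) ^+ 2 in Hq *; lra.
rewrite /bregman; lra.
Qed.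

Lemma breg_ge0 (N : 'rV[R]_k -> R) u v : strongly_convex1 N psi ->
  0 <= bregman psi u v.
Proof.
move=> sc; apply: le_trans (breg_ge u v sc).
by rewrite mulr_ge0 // ?sqr_ge0 // invr_ge0.
Qed.
End Breg.
Lemma convex2 (R : realType) (V : lmodType R) (A : set V) :
  convex_set (A : set (convex_lmodType V)) ->
  forall a b (t : R), A a -> A b -> 0 <= t <= 1 -> A (t *: a + (1 - t) *: b).
Proof.
move=> cA a b t Aa Ab /andP[t0 t1].
have := cA a b (Itv01 t0 t1); rewrite !inE; apply => //.
Qed.

Lemma prodset_conv (R : realType) n m (X : set 'rV[R]_n) (Y : set 'rV[R]_m) :
  convex_set X -> convex_set Y ->
  forall a b (t : R), prodset X Y a -> prodset X Y b -> 0 <= t <= 1 ->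
   prodset X Y (t *: a + (1 - t) *: b).
Proof.
move=> cX cY a b t [Xa Ya] [Xb Yb] t01; split.
  by rewrite linearD !linearZ /=; apply: convex2.
by rewrite linearD !linearZ /=; apply: convex2.
Qed.

Lemma sum0_nonneg (R : realType) (c : nat -> R) T :
  (forall t, 0 <= c t) -> \sum_(1 <= t < T.+1) c t = 0 ->
  forall t, (1 <= t <= T)%N -> c t = 0.
Proof.
move=> c0; elim: T => [|T IH].
  by move=> _ t /andP[h1 h2]; move: (leq_trans h1 h2).
rewrite (big_nat_recr T.+1 1) //= => /eqP.
have s0 : 0 <= \sum_(1 <= t < T.+1) c t by apply: sumr_ge0 => i _; exact: c0.
rewrite paddr_eq0 // => /andP[/eqP h1 /eqP h2].
move=> t /andP[t1 tT]; have [/eqP ->//|tne] := boolP (t == T.+1).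
by apply: IH => //; rewrite t1 /=; rewrite leq_eqVlt (negbTE tne) /= ltnS in tT.
Qed.

Lemma jensen (R : realType) (V : lmodType R) (A : set V) (f : V -> R) :
  (forall a b (t : R), A a -> A b -> 0 <= t <= 1 -> A (t *: a + (1 - t) *: b)) ->
  (forall a b (t : R), A a -> A b -> 0 <= t <= 1 ->
     f (t *: a + (1 - t) *: b) <= t * f a + (1 - t) * f b) ->
  forall (c : nat -> R) (a : nat -> V), (forall t, 0 <= c t) -> (forall t, A (a t)) ->
  forall T, 0 < \sum_(1 <= t < T.+1) c t ->
  A ((\sum_(1 <= t < T.+1) c t)^-1 *: \sum_(1 <= t < T.+1) c t *: a t) /\
  f ((\sum_(1 <= t < T.+1) c t)^-1 *: \sum_(1 <= t < T.+1) c t *: a t) <=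
    (\sum_(1 <= t < T.+1) c t)^-1 * \sum_(1 <= t < T.+1) c t * f (a t).
Proof.
move=> cA cf c a c0 Aa; elim => [|T IH].
  by rewrite big_geq // ltxx.
rewrite !(big_nat_recr T.+1 1) //=.
set S := \sum_(1 <= t < T.+1) c t.
set SV := \sum_(1 <= t < T.+1) c t *: a t.
set SF := \sum_(1 <= t < T.+1) c t * f (a t).
move=> Sp.
have S0 : 0 <= S by apply: sumr_ge0 => i _; exact: c0.
have [Sz|Spos] := eqVneq S 0.
  have cz := sum0_nonneg c0 Sz.
  have -> : SV = 0.
    rewrite /SV big_nat big1 // => t /andP[h1 h2]; rewrite cz ?scale0r //.
    by rewrite h1 -ltnS.
  have -> : SF = 0.
    rewrite /SF big_nat big1 // => t /andP[h1 h2]; rewrite cz ?mul0r //.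
    by rewrite h1 -ltnS.
  move: Sp; rewrite Sz !add0r => cp.
  by rewrite scalerA mulVf ?gt_eqF // scale1r mulrA mulVf ?gt_eqF // mul1r.
have Sp' : 0 < S by rewrite lt0r Spos.
have [IH1 IH2] := IH Sp'.
rewrite -/S -/SV -/SF in IH1 IH2.
have t01 : 0 <= S / (S + c T.+1) <= 1.
  rewrite divr_ge0 ?(ltW Sp') ?(ltW Sp) //= ler_pdivrMr // mul1r lerDl; exact: c0.
have e1 : 1 - S / (S + c T.+1) = c T.+1 / (S + c T.+1).
  by field; rewrite gt_eqF.
have ev : (S + c T.+1)^-1 *: (SV + c T.+1 *: a T.+1) =
   (S / (S + c T.+1)) *: (S^-1 *: SV) + (1 - S / (S + c T.+1)) *: a T.+1.
  rewrite e1 !scalerA scalerDr scalerA; congr (_ *: _ + _).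
    by field; rewrite Spos gt_eqF.
  by rewrite mulrC.
rewrite ev; split; first exact: cA.
apply: le_trans (cf _ _ _ IH1 (Aa _) t01) _.
rewrite e1.
have : S / (S + c T.+1) * f (S^-1 *: SV) <= S / (S + c T.+1) * (S^-1 * SF).
  by rewrite ler_wpM2l // divr_ge0 // ?(ltW Sp') ?(ltW Sp).
move=> H; apply: le_trans (lerD H (lexx _)) _.
rewrite le_eqVlt; apply/orP; left; apply/eqP.
by field; rewrite Spos gt_eqF.
Qed.
Lemma dotv_lsub (R : realType) n m (g : 'rV[R]_(n + m)) (d : 'rV[R]_n) :
  dotv g (row_mx d 0) = dotv (lsubmx g) d.
Proof. by rewrite -{1}(hsubmxK g) dotv_row_mx dotv0r addr0. Qed.

Lemma dotv_rsub (R : realType) n m (g : 'rV[R]_(n + m)) (d : 'rV[R]_m) :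
  dotv g (row_mx 0 d) = dotv (rsubmx g) d.
Proof. by rewrite -{1}(hsubmxK g) dotv_row_mx dotv0r add0r. Qed.

Lemma grad_x (R : realType) n m (phi : 'rV[R]_(n + m) -> R) x x' y :
  differentiable phi (row_mx x y) ->
  (forall t : R, 0 <= t <= 1 ->
    phi (row_mx (t *: x' + (1 - t) *: x) y) <= t * phi (row_mx x' y) + (1 - t) * phi (row_mx x y)) ->
  dotv (lsubmx (grad phi (row_mx x y))) (x' - x) <= phi (row_mx x' y) - phi (row_mx x y).
Proof.
move=> dp cv; rewrite -dotv_lsub dotv_grad //.
have dd : derivable phi (row_mx x y) (row_mx (x' - x) 0) by exact: diff_derivable.
apply: (@D_le R _ phi _ _ _ 0 dd) => s /andP[s0 s1].
have e : s *: row_mx (x' - x) 0 + row_mx x y = row_mx (s *: x' + (1 - s) *: x) y.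
  rewrite scale_row_mx add_row_mx scaler0 add0r; congr row_mx.
  by rewrite scalerBr scalerBl scale1r [RHS]addrA addrAC.
rewrite e mulr0 addr0 ler_pdivrMl //.
have := cv s (introT andP (conj (ltW s0) s1)); lra.
Qed.

Lemma grad_y (R : realType) n m (phi : 'rV[R]_(n + m) -> R) x y y' :
  differentiable phi (row_mx x y) ->
  (forall t : R, 0 <= t <= 1 ->
    t * phi (row_mx x y') + (1 - t) * phi (row_mx x y) <= phi (row_mx x (t *: y' + (1 - t) *: y))) ->
  phi (row_mx x y') - phi (row_mx x y) <= dotv (rsubmx (grad phi (row_mx x y))) (y' - y).
Proof.
move=> dp cv; rewrite -dotv_rsub dotv_grad //.
have dd : derivable phi (row_mx x y) (row_mx 0 (y' - y)) by exact: diff_derivable.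
apply: (@D_ge R _ phi _ _ _ 0 dd) => s /andP[s0 s1].
have e : s *: row_mx 0 (y' - y) + row_mx x y = row_mx x (s *: y' + (1 - s) *: y).
  rewrite scale_row_mx add_row_mx scaler0 add0r; congr row_mx.
  by rewrite scalerBr scalerBl scale1r [RHS]addrA addrAC.
rewrite e mulr0 subr0 ler_pdivlMl //.
have := cv s (introT andP (conj (ltW s0) s1)); lra.
Qed.

Lemma abel (R : realType) (w D : nat -> R) B T :
  (forall s t, (s <= t)%N -> w s <= w t) -> (forall t, 0 <= w t) ->
  (forall t, (1 <= t <= T)%N -> D t <= B) -> (1 <= T)%N ->
  \sum_(1 <= t < T.+1) w t * (D t - D t.+1) <= w T * B - w T * D T.+1.
Proof.
move=> wm w0; elim: T => [//|T IH] DB _.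
case: T IH DB => [|T] IH DB.
  rewrite big_nat1; have := DB 1%N erefl; have := w0 1%N; nra.
rewrite (big_nat_recr T.+2 1) //=.
have IH' := IH (fun t ht => DB t (ltac:(case/andP: ht => h1 h2; rewrite h1 /=; exact: leqW h2))) erefl.
have h1 : D T.+2 <= B by apply: DB; rewrite leqnn.
have h2 := wm _ _ (leqnSn T.+1); have h3 := w0 T.+1.
nra.
Qed.
Lemma general_bound (R : realType) (n m : nat)
  (N : 'rV[R]_(n + m) -> R) (X : set 'rV[R]_n) (Y : set 'rV[R]_m)
  (phi : 'rV[R]_(n + m) -> R) (psi : 'rV[R]_(n + m) -> R) :
  convex_set X -> convex_set Y ->
  (forall (x1 x2 : 'rV[R]_n) (y : 'rV[R]_m) (t : R), X x1 -> X x2 -> Y y -> 0 <= t <= 1 ->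
     phi (row_mx (t *: x1 + (1 - t) *: x2) y)
       <= t * phi (row_mx x1 y) + (1 - t) * phi (row_mx x2 y)) ->
  (forall (x : 'rV[R]_n) (y1 y2 : 'rV[R]_m) (t : R), X x -> Y y1 -> Y y2 -> 0 <= t <= 1 ->
     t * phi (row_mx x y1) + (1 - t) * phi (row_mx x y2)
       <= phi (row_mx x (t *: y1 + (1 - t) *: y2))) ->
  (forall z, prodset X Y z -> differentiable phi z) ->
  (forall z, differentiable psi z) ->
  strongly_convex1 N psi ->
  (forall (tau w : nat -> R) (z zt : nat -> 'rV[R]_(n + m)),
     prodset X Y (z 0%N) ->
     (forall t, 0 < tau t) ->
     (forall t, is_prox psi (prodset X Y) (tau t *: Fop phi (z t)) (z t) (zt t)) ->
     (forall t, is_prox psi (prodset X Y) (tau t *: Fop phi (zt t)) (z t) (z t.+1)) ->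
     (forall t, 0 <= w t) ->
     (forall s t, (s <= t)%N -> w s <= w t) ->
     forall T : nat, (1 <= T)%N -> 0 < mp_S w tau T ->
     forall (x : 'rV[R]_n) (y : 'rV[R]_m), X x -> Y y ->
       ((phi (row_mx (lsubmx (mp_zbar w tau zt T)) y)
         - phi (row_mx x (rsubmx (mp_zbar w tau zt T))))%:E
        <= ((w T)%:E * Omega psi (prodset X Y)
            + (\sum_(1 <= t < T.+1) w t * mp_delta psi (Fop phi) tau z zt t)%:E)
           * ((mp_S w tau T)^-1)%:E)%E).
Proof.
move=> cX cY cvx ccv phid psid sc tau w z zt Z0 taup P1 P2 w0 wm T T1 Sp x y Xx Yy.
have Zc := prodset_conv cX cY.
have Zz : forall t, prodset X Y (z t) by case => [//|t]; case: (P2 t).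
have Zzt : forall t, prodset X Y (zt t) by move=> t; case: (P1 t).
set u := row_mx x y.
have Zu : prodset X Y u by split; rewrite /u ?row_mxKl ?row_mxKr.
pose Dt t := bregman psi u (z t).
have HA : forall t, tau t * dotv (Fop phi (zt t)) (zt t - u) <=
    Dt t - Dt t.+1 + mp_delta psi (Fop phi) tau z zt t.
  move=> t; have := prox_ineq psid Zc (P2 t) Zu; rewrite /mp_delta dotvZl /Dt.
  have -> : zt t - u = (zt t - z t.+1) + (z t.+1 - u) by rewrite addrA subrK.
  move=> H; rewrite !dotvDr !dotvNr in H *; lra.
have HB : forall t, phi (row_mx (lsubmx (zt t)) y) - phi (row_mx x (rsubmx (zt t)))
    <= dotv (Fop phi (zt t)) (zt t - u).
  move=> t; have [Xa Yb] := Zzt t.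
  move: Xa Yb; set a := lsubmx (zt t); set b := rsubmx (zt t) => Xa Yb.
  have ez : zt t = row_mx a b by rewrite hsubmxK.
  have dp : differentiable phi (row_mx a b) by rewrite -ez; apply: phid.
  have hx := grad_x (x' := x) dp (fun s hs => cvx x a b s Xx Xa Yb hs).
  have hy := grad_y (y' := y) dp (fun s hs => ccv a y b s Xa Yy Yb hs).
  rewrite ez /Fop /u opp_row_mx add_row_mx dotv_row_mx.
  rewrite !dotvDr !dotvNr ?dotvNl in hx hy *.
  lra.
set S := mp_S w tau T.
pose c t := w t * tau t.
have c0 : forall t, 0 <= c t by move=> t; rewrite mulr_ge0 // ltW.
have eS : S = \sum_(1 <= t < T.+1) c t by [].
have el : lsubmx (mp_zbar w tau zt T) = S^-1 *: \sum_(1 <= t < T.+1) c t *: lsubmx (zt t).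
  rewrite /mp_zbar linearZ /= linear_sum /=; congr (_ *: _).
  by apply: eq_bigr => i _; rewrite linearZ.
have er : rsubmx (mp_zbar w tau zt T) = S^-1 *: \sum_(1 <= t < T.+1) c t *: rsubmx (zt t).
  rewrite /mp_zbar linearZ /= linear_sum /=; congr (_ *: _).
  by apply: eq_bigr => i _; rewrite linearZ.
have Sp' : 0 < \sum_(1 <= t < T.+1) c t by rewrite -eS.
have [_ J1] := jensen (f := fun x' => phi (row_mx x' y)) (convex2 cX)
  (fun a b s Xa Xb hs => cvx a b y s Xa Xb Yy hs) c0 (fun t => (Zzt t).1) Sp'.
have [_ J2] := jensen (f := fun y' => - phi (row_mx x y')) (convex2 cY)
  (fun a b s Ya Yb hs => ltac:(have := ccv x a b s Xx Ya Yb hs; lra)) c0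
  (fun t => (Zzt t).2) Sp'.
rewrite /= -eS -el -er in J1 J2.
set G := \sum_(1 <= t < T.+1) w t * (Dt t - Dt t.+1).
set Q := \sum_(1 <= t < T.+1) w t * mp_delta psi (Fop phi) tau z zt t.
have Hsum : \sum_(1 <= t < T.+1) c t * phi (row_mx (lsubmx (zt t)) y) +
    \sum_(1 <= t < T.+1) c t * - phi (row_mx x (rsubmx (zt t))) <= G + Q.
  rewrite /G /Q -!big_split /=; apply: ler_sum => t _.
  have h3 := ler_wpM2l (c0 t) (HB t).
  have h4 := ler_wpM2l (w0 t) (HA t).
  rewrite /c in h3 *; lra.
have Si : 0 <= S^-1 by rewrite invr_ge0 ltW.
have HC := ler_wpM2l Si Hsum.
have wT : 0 < w T.
  rewrite lt_neqAle w0 andbT; apply/negP => /eqP wT0.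
  move: Sp; rewrite /S /mp_S big_nat big1 ?ltxx // => t /andP[t1 tT].
  have : w t <= w T by apply: wm; rewrite -ltnS.
  by rewrite -wT0 => h; rewrite (@le_anti _ _ (w t) 0 (introT andP (conj h (w0 t)))) mul0r.
have Dle : forall t, ((Dt t)%:E <= Omega psi (prodset X Y))%E.
  move=> t; apply: ereal_sup_ubound; exists u => //; exists (z t) => //.
have Dge : forall t, 0 <= Dt t by move=> t; exact: (breg_ge0 psid _ _ sc).
move: Dle; case: (Omega psi (prodset X Y)) => [r| |] Dle.
- have Dr : forall t, (1 <= t <= T)%N -> Dt t <= r by move=> t _; exact: Dle.
  have HG := abel wm w0 Dr T1; rewrite -/G in HG.
  rewrite -(EFinM (w T) r) -EFinD -EFinM lee_fin.
  have := Dge T.+1; have := ler_wpM2l (ltW wT) (Dge T.+1).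
  rewrite mulr0 => h1 h2.
  have : S^-1 * G <= S^-1 * (w T * r) by rewrite ler_wpM2l //; lra.
  rewrite mulrDr in HC; lra.
- rewrite gt0_muley ?lte_fin // addye // gt0_mulye ?leey // lte_fin invr_gt0 //.
- by have := Dle 1%N.
Qed.

Lemma powR_key (R : realType) (q a : R) : 0 <= q -> 0 <= a ->
  (a + 1) `^ q * (a + 1) <= a `^ q * a + (q + 1) * (a + 1) `^ q.
Proof.
move=> q0 a0; have [->|qn0] := eqVneq q 0.
  by rewrite !powRr0 !mul1r add0r mulr1 addrC.
have qp : 0 < q by rewrite lt0r qn0.
have a1 : 0 < a + 1 by rewrite ltr_wpDl.
have p0 : 0 < q + 1 by rewrite ltr_wpDl.
have q'0 : 0 < (q + 1) / q by rewrite divr_gt0.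
have pq : (q + 1)^-1 + ((q + 1) / q)^-1 = 1.
  by field; rewrite ?gt_eqF // qn0.
have Y := conjugate_powR a0 (powR_ge0 (a + 1) q) p0 q'0 pq.
have eA : a `^ (q + 1) = a `^ q * a.
  rewrite powRD; last by rewrite gt_eqF.
  by rewrite powRr1.
have eB : ((a + 1) `^ q) `^ ((q + 1) / q) = (a + 1) `^ q * (a + 1).
  rewrite -powRrM.
  have -> : q * ((q + 1) / q) = q + 1 by field.
  by rewrite powRD ?gt_eqF // powRr1 // ltW.
rewrite eA eB in Y.
move: Y; set A := a `^ q * a; set B := (a + 1) `^ q; move=> Y.
have E : (q + 1) * (A / (q + 1) + B * (a + 1) / ((q + 1) / q)) = A + B * (a + 1) * q.
  by field; rewrite ?gt_eqF // qn0.
have := ler_wpM2l (ltW p0) Y; rewrite E => Y2.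
have B0 : 0 <= B by exact: powR_ge0.
nra.
Qed.

Lemma powR_sum (R : realType) (q : R) : 0 <= q -> forall T : nat,
  (T%:R : R) `^ q * T%:R <= (q + 1) * \sum_(1 <= t < T.+1) (t%:R : R) `^ q.
Proof.
move=> q0; elim => [|T IH].
  by rewrite mulr0 big_geq // mulr0.
rewrite big_nat_recr //= mulrDr -natr1.
have := powR_key q0 (ler0n R T); lra.
Qed.
Theorem theorem5 (R : realType) (n m : nat)
  (N : 'rV[R]_(n + m) -> R) (X : set 'rV[R]_n) (Y : set 'rV[R]_m)
  (phi : 'rV[R]_(n + m) -> R) (psi : 'rV[R]_(n + m) -> R) (L : R) :
  is_norm N ->
  closed X -> convex_set X -> closed Y -> convex_set Y ->
  (* phi convex in x *)
  (forall (x1 x2 : 'rV[R]_n) (y : 'rV[R]_m) (t : R), X x1 -> X x2 -> Y y -> 0 <= t <= 1 ->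
     phi (row_mx (t *: x1 + (1 - t) *: x2) y)
       <= t * phi (row_mx x1 y) + (1 - t) * phi (row_mx x2 y)) ->
  (* phi concave in y *)
  (forall (x : 'rV[R]_n) (y1 y2 : 'rV[R]_m) (t : R), X x -> Y y1 -> Y y2 -> 0 <= t <= 1 ->
     t * phi (row_mx x y1) + (1 - t) * phi (row_mx x y2)
       <= phi (row_mx x (t *: y1 + (1 - t) *: y2))) ->
  (* phi differentiable on Z *)
  (forall z, prodset X Y z -> differentiable phi z) ->
  (* sup_{z in Z} ||F z||_* < oo *)
  (exists M : R, forall z, prodset X Y z -> dual_norm N (Fop phi z) <= M) ->
  (* F is L-Lipschitz *)
  (forall z z', prodset X Y z -> prodset X Y z' ->
     dual_norm N (Fop phi z - Fop phi z') <= L * N (z - z')) ->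
  (* psi smooth and 1-strongly convex w.r.t. N *)
  (forall z, differentiable psi z) ->
  strongly_convex1 N psi ->
  (* general bound *)
  (forall (tau w : nat -> R) (z zt : nat -> 'rV[R]_(n + m)),
     prodset X Y (z 0%N) ->
     (forall t, 0 < tau t) ->
     (forall t, is_prox psi (prodset X Y) (tau t *: Fop phi (z t)) (z t) (zt t)) ->
     (forall t, is_prox psi (prodset X Y) (tau t *: Fop phi (zt t)) (z t) (z t.+1)) ->
     (forall t, 0 <= w t) ->
     (forall s t, (s <= t)%N -> w s <= w t) ->
     forall T : nat, (1 <= T)%N -> 0 < mp_S w tau T ->
     forall (x : 'rV[R]_n) (y : 'rV[R]_m), X x -> Y y ->
       ((phi (row_mx (lsubmx (mp_zbar w tau zt T)) y)
         - phi (row_mx x (rsubmx (mp_zbar w tau zt T))))%:E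
        <= ((w T)%:E * Omega psi (prodset X Y)
            + (\sum_(1 <= t < T.+1) w t * mp_delta psi (Fop phi) tau z zt t)%:E)
           * ((mp_S w tau T)^-1)%:E)%E)
  /\
  (* special case tau_t = 1/L, w_t = t^q *)
  (forall (q : R) (z zt : nat -> 'rV[R]_(n + m)),
     0 <= q -> 0 < L ->
     prodset X Y (z 0%N) ->
     (forall t, is_prox psi (prodset X Y) (L^-1 *: Fop phi (z t)) (z t) (zt t)) ->
     (forall t, is_prox psi (prodset X Y) (L^-1 *: Fop phi (zt t)) (z t) (z t.+1)) ->
     (forall t, mp_delta psi (Fop phi) (fun _ => L^-1) z zt t <= 0) /\
     (forall T : nat, (1 <= T)%N ->
      forall (x : 'rV[R]_n) (y : 'rV[R]_m), X x -> Y y ->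
        let zb := mp_zbar (fun t => (t%:R : R) `^ q) (fun _ => L^-1) zt T in
        ((phi (row_mx (lsubmx zb) y) - phi (row_mx x (rsubmx zb)))%:E
         <= ((q + 1) * L / T%:R)%:E * Omega psi (prodset X Y))%E)).
Proof.
move=> HN cX cX' cY cY' cvx ccv phid Fb HL psid sc.
have GB := general_bound (N := N) cX' cY' cvx ccv phid psid sc.
split; first exact: GB.
move=> q z zt q0 L0 Z0 P1 P2.
have Zc := prodset_conv cX' cY'.
have Zz : forall t, prodset X Y (z t) by case => [//|t]; case: (P2 t).
have Zzt : forall t, prodset X Y (zt t) by move=> t; case: (P1 t).
have dle : forall t, mp_delta psi (Fop phi) (fun _ => L^-1) z zt t <= 0.
  move=> t; rewrite /mp_delta.
  have P := prox_ineq psid Zc (P1 t) (Zz t.+1).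
  move: P; set a := z t; set b := zt t; set c := z t.+1 => P.
  have Lip := HL b a (Zzt t) (Zz t).
  have db := dual_bound HN (Fop phi b - Fop phi a) (b - c).
  have h1 := le_trans db (ler_wpM2r (Nge0 HN (b - c)) Lip).
  have Li : 0 <= L^-1 by rewrite invr_ge0 ltW.
  have h2 := ler_wpM2l Li h1.
  rewrite !mulrA mulVf ?gt_eqF // mul1r dotvBl mulrBr in h2.
  have g1 := breg_ge psid b a sc.
  have g2 := breg_ge psid c b sc.
  rewrite (NB HN c b) in g2.
  rewrite dotvZl in P.
  have n1 := Nge0 HN (b - a); have n2 := Nge0 HN (b - c).
  move: h2 g1 g2 P; set N1 := N (b - a); set N2 := N (b - c) => h2 g1 g2 P.
  have sq : 0 <= (N1 - N2) ^+ 2 by rewrite sqr_ge0.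
  nra.
split; first exact: dle.
move=> T T1 x y Xx Yy /=.
pose w := fun t : nat => (t%:R : R) `^ q.
have w0 : forall t, 0 <= w t by move=> t; exact: powR_ge0.
have wm : forall s t, (s <= t)%N -> w s <= w t.
  move=> s t st; apply: ge0_ler_powR => //; rewrite ?nnegrE ?ler0n ?ler_nat //.
have Li : 0 < L^-1 by rewrite invr_gt0.
set P := \sum_(1 <= t < T.+1) w t.
have eS : mp_S w (fun _ => L^-1) T = L^-1 * P.
  by rewrite /mp_S /P mulr_sumr; apply: eq_bigr => i _; rewrite mulrC.
have Pp : 0 < P.
  rewrite /P big_ltn // /w powR1 ltr_pwDl // sumr_ge0 // => i _; exact: powR_ge0.
have Sp : 0 < mp_S w (fun _ => L^-1) T by rewrite eS mulr_gt0.
have := GB (fun _ => L^-1) w z zt Z0 (fun _ => Li) P1 P2 w0 wm T T1 Sp x y Xx Yy.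
rewrite -/w.
set l := (phi _ - phi _).
set Q := \sum_(1 <= t < T.+1) _.
have Q0 : Q <= 0.
  rewrite /Q; apply: sumr_le0 => t _; rewrite mulr_ge0_le0 //.
have Om0 : (0 <= Omega psi (prodset X Y))%E.
  apply: le_trans (ereal_sup_ubound _); last by exists (z 0%N) => //; exists (z 0%N).
  by rewrite breg_self.
have Tp : 0 < T%:R :> R by rewrite ltr0n.
move: Om0; case: (Omega psi (prodset X Y)) => [r| |] Om0.
- rewrite lee_fin in Om0.
  rewrite -(EFinM (w T) r) -EFinD -EFinM -EFinM !lee_fin => H.
  apply: le_trans H _.
  have key : w T * (mp_S w (fun _ => L^-1) T)^-1 <= (q + 1) * L / T%:R.
    have hs := powR_sum q0 T; rewrite -/P in hs.
    have e1 : w T * (mp_S w (fun _ => L^-1) T)^-1 = (w T * T%:R) * (L / (P * T%:R)).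
      rewrite eS /w; field; rewrite ?gt_eqF //.
    have e2 : (q + 1) * L / T%:R = ((q + 1) * P) * (L / (P * T%:R)).
      by field; rewrite ?gt_eqF.
    rewrite e1 e2; apply: ler_wpM2r; first by rewrite divr_ge0 ?mulr_ge0 ?ltW.
    by rewrite /w.
  have Si : 0 <= (mp_S w (fun _ => L^-1) T)^-1 by rewrite invr_ge0 ltW.
  have h1 := ler_wpM2r Om0 key.
  have h2 : Q * (mp_S w (fun _ => L^-1) T)^-1 <= 0 by rewrite mulr_le0_ge0.
  rewrite mulrDl; lra.
- move=> _; rewrite gt0_muley ?leey // lte_fin divr_gt0 // mulr_gt0 //.
  by rewrite ltr_wpDl.
- by [].
Qed.
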